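(* Let $c_1\in(0,0.01)$ be a sufficiently small absolute constant and $c_0$ a sufficiently large absolute constant, let $n$ be sufficiently large and $\epsilon\in[c_0/\sqrt n,1)$. Then every function in the support of $\mathcal D_{\mathrm{yes}}$ is $(0.1c_1\epsilon)$-close to some monotone function $g:\{0,1\}^n\to\{0,1\}$, i.e. $\Pr_{x}[f(x)\ne g(x)]\le 0.1c_1\epsilon$.
   Context: Parameters: $a=\sqrt n/\epsilon$ and $m=n-a$ (assumed integers), $L=0.1\cdot 2^{\sqrt m/\epsilon}$. For $x\in\{0,1\}^n$ and $B\subseteq[n]$, $x_B\in\{0,1\}^B$ is the restriction of $x$ to $B$; $|z|$ is Hamming weight. For a set $A$ of size $a$, define on $\{0,1\}^A$: $h^{(+,0)}\equiv 0$; $h^{(+,1)}(z)=1$ if $|z|>a/2+c_1\sqrt a$ or $|z|<a/2-c_1\sqrt a$, and $0$ otherwise; $h^{(-,0)}(z)=1$ iff $|z|>a/2+c_1\sqrt a$; $h^{(-,1)}(z)=1$ iff $|z|<a/2-c_1\sqrt a$. $\mathsf{Talagrand}(m,\epsilon)$ on a coordinate set $C$ of size $m$: draw $L$ independent sets $\mathbf T_1,\dots,\mathbf T_L\subseteq C$, each formed by $\sqrt m/\epsilon$ independent uniform draws from $C$ with replacement; for $y\in\{0,1\}^C$, $S_T(y)=\{\ell: y_j=1\ \forall j\in T_\ell\}$. A draw $\mathbf f_{\mathrm{yes}}\sim\mathcal D_{\mathrm{yes}}$: choose $\mathbf A\subseteq[n]$ uniformly among sets of size $a$, put $\mathbf C=[n]\setminus\mathbf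 A$, draw $\mathbf T\sim\mathsf{Talagrand}(m,\epsilon)$ on $\mathbf C$, and uniform $\mathbf b\in\{0,1\}^L$; then $\mathbf f_{\mathrm{yes}}(x)=1$ if $|S_{\mathbf T}(x_{\mathbf C})|>1$ or $|x_{\mathbf C}|>m/2+0.05\epsilon\sqrt m$; otherwise $\mathbf f_{\mathrm{yes}}(x)=0$ if $|S_{\mathbf T}(x_{\mathbf C})|=0$ or $|x_{\mathbf C}|<m/2$; otherwise $S_{\mathbf T}(x_{\mathbf C})=\{\ell\}$ and $|x_{\mathbf C}|\in[m/2,m/2+0.05\epsilon\sqrt m]$, and $\mathbf f_{\mathrm{yes}}(x)=h^{(+,\mathbf b_\ell)}(x_{\mathbf A})$. A function is monotone if $f(x)\le f(y)$ whenever $x\le y$ coordinatewise. *)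

(* Defs.v *)
From HB Require Import structures.
From mathcomp Require Import all_boot all_order all_algebra.
From mathcomp Require Import Rstruct.
Set Implicit Arguments. Unset Strict Implicit. Unset Printing Implicit Defensive.
Import Order.TTheory GRing.Theory Num.Theory.
Local Open Scope ring_scope.

Notation R := Rdefinitions.R.

Notation cube n := {ffun 'I_n -> bool}.

Definition hw (n : nat) (x : cube n) (B : {set 'I_n}) : nat :=
  #|[set i in B | x i]|.

(* h^{(+,0)} = 0 and h^{(+,1)}, as functions of z in {0,1}^A, which depend
   only on |z|; asz = a = |A|. *)
Definition h_plus (c1 : R) (asz : nat) (bit : bool) (wz : nat) : bool :=
  if bit then
    (((asz%:R : R) / 2 + c1 * Num.sqrt asz%:R < wz%:R) ||
     ((wz%:R : R) < asz%:R / 2 - c1 * Num.sqrt asz%:R))%R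
  else false.

Definition S_T (n L k : nat) (T : 'I_L -> k.-tuple 'I_n) (x : cube n)
  : {set 'I_L} := [set l : 'I_L | all (fun j => x j) (T l)].

Definition f_yes (n : nat) (c1 eps : R) (L k : nat) (A : {set 'I_n})
  (T : 'I_L -> k.-tuple 'I_n) (b : 'I_L -> bool) (x : cube n) : bool :=
  let m := (n - #|A|)%N in
  let wC := hw x (~: A) in
  let S := S_T T x in
  if (1 < #|S|)%N || ((m%:R : R) / 2 + eps * Num.sqrt m%:R / 20 < wC%:R)%R then true
  else if (#|S| == 0)%N || ((wC%:R : R) < m%:R / 2)%R then false
  else match [pick l in S] with
       | Some l => h_plus c1 #|A| (b l) (hw x A)
       | None => false
       end.

Definition monotone (n : nat) (g : cube n -> bool) : Prop :=
  forall x y : cube n, (forall i, x i ==> y i) -> g x ==> g y.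

Definition dist (n : nat) (f g : cube n -> bool) : R :=
  #|[set x : cube n | f x != g x]|%:R / (2 ^ n)%:R.

(* Main.v *)
Require Import Defs.
From HB Require Import structures.
From mathcomp Require Import all_boot all_order all_algebra.
From mathcomp Require Import Rstruct zify ring lra.
Import Order.TTheory GRing.Theory Num.Theory.

Lemma bin_step s : s.+1 * 'C(s.*2.+2, s.+1) = 2 * s.*2.+1 * 'C(s.*2, s).
Proof.
have h1 := mul_bin_diag s.*2.+2 s.
have h2 := mul_bin_diag s.*2.+1 s.
rewrite /= in h1 h2.
have h3 : 'C(s.*2.+1, s.+1) = 'C(s.*2.+1, s).
  rewrite -(bin_sub (n:=s.*2.+1) (m:=s)); last by lia.
  by congr 'C(_,_); lia.
rewrite h3 in h2.
rewrite -h1.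
have : s.+1 * (s.*2.+2 * 'C(s.*2.+1, s)) = s.+1 * (2 * s.*2.+1 * 'C(s.*2, s)).
  rewrite -mulnA h2. lia.
move/eqP; rewrite eqn_pmul2l //; move/eqP=> ->. done.
Qed.

Lemma bin_central s : 'C(s.*2, s) ^ 2 * (3 * s + 1) <= 16 ^ s.
Proof.
elim: s => [|s IH]; first by rewrite bin0.
have E := bin_step s.
set C := 'C(s.*2, s) in E IH *; set C' := 'C(s.*2.+2, s.+1) in E *.
have : s.+1 ^ 2 * (C' ^ 2 * (3 * s.+1 + 1)) <= s.+1 ^ 2 * 16 ^ s.+1.
  have -> : s.+1 ^ 2 * (C' ^ 2 * (3 * s.+1 + 1)) = 4 * s.*2.+1 ^2 * (3*s+4) * C ^ 2.
    rewrite mulnA -expnMn E. rewrite !expnMn. lia.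
  have h : 4 * s.*2.+1 ^2 * (3*s+4) <= 16 * s.+1 ^ 2 * (3 * s + 1).
    rewrite -mul2n !expnS !expn0 !muln1. nia.
  apply: (leq_trans (leq_mul h (leqnn _))).
  rewrite [16 ^ s.+1]expnS.
  move: IH h; set P := s.+1 ^ 2; set Q := 16 ^ s; set D := C ^ 2.
  set X := 4 * _ * _; set Y := 3 * s + 1 => IH h.

  have := leq_mul (leqnn (16 * P)) IH. rewrite !mulnA. lia.
by rewrite leq_pmul2l ?expn_gt0.
Qed.

Lemma bin_mono t i j : i <= j -> j <= t./2 -> 'C(t, i) <= 'C(t, j).
Proof.
elim: j => [|j IH] hij hj; first by have -> : i = 0 by lia.
case: (ltngtP i j.+1) => h; [|lia|by rewrite h].
apply: leq_trans (IH _ _) _; [lia|lia|].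
have E := mul_bin_left t j.
have ht : j.+1 <= t - j by have := odd_double_half t; rewrite -addnn; lia.
rewrite -(leq_pmul2l (ltn0Sn j)) E. by rewrite leq_mul2r ht orbT.
Qed.

Lemma bin_max t i : 'C(t, i) <= 'C(t, t./2).
Proof.
have hd := odd_double_half t; rewrite -addnn in hd.
case: (leqP i t./2) => hi; first exact: bin_mono.
case: (leqP i t) => hit; last by rewrite bin_small.
rewrite -bin_sub //; apply: bin_mono; lia.
Qed.

Lemma bin_sq t i : 'C(t, i) ^ 2 * (3 * t + 2) <= 2 * 4 ^ t.
Proof.
have hd := odd_double_half t.
have hb : 'C(t, i) ^ 2 <= 'C(t, t./2) ^ 2 by rewrite leq_sqr bin_max.
apply: leq_trans (leq_mul hb (leqnn _)) _.
case Ho: (odd t) hd => /= hd.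
- set s := t./2 in hd *.
  have E := bin_step s.
  have h2 : s.*2.+2 * 'C(s.*2.+1, s) = s.+1 * 'C(s.*2.+2, s.+1) := mul_bin_diag _ _.
  have Hc := bin_central s.+1.
  rewrite -hd /=.
  have -> : 4 ^ s.*2.+1 = 4 * 16 ^ s.
    by rewrite expnS -mul2n expnM.
  move: Hc; rewrite -/(s.+1.*2) in h2 *.
  rewrite [16 ^ s.+1]expnS.
  set C := 'C(s.*2.+1, s) in h2 *; set C' := 'C(s.+1.*2, s.+1) in h2 *.
  have hC : C' = 2 * C.
    apply/eqP; rewrite -(eqn_pmul2l (ltn0Sn s)) -h2; apply/eqP; rewrite doubleS -addnn; lia.
  rewrite hC => Hc.
  set Q := 16 ^ s in Hc *.
  have : C ^ 2 * (3 * s + 4) * 4 <= 16 * Q.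
    by move: Hc; rewrite expnMn; set D := C ^ 2; lia.
  set D := C ^ 2; rewrite -addnn; nia.
- set s := t./2 in hd *.
  have Hc := bin_central s.
  rewrite -hd /= add0n.
  have -> : 4 ^ s.*2 = 16 ^ s by rewrite -mul2n expnM.
  set Q := 16 ^ s in Hc *. set D := 'C(s.*2, s) ^ 2 in Hc *. rewrite -addnn; nia.
Qed.
Lemma card_subsets_band n (A : {set 'I_n}) (P : pred nat) M :
  (forall i, 'C(#|A|, i) <= M) ->
  #|[set B : {set 'I_n} | (B \subset A) && P #|B|]| <= count P (iota 0 n.+1) * M.
Proof.
move=> HM.
rewrite -sum1_card.
rewrite (partition_big (fun B : {set 'I_n} => (inord #|B| : 'I_n.+1)) (fun j : 'I_n.+1 => P j)); last first.
  move=> B; rewrite inE => /andP[_ HP]. rewrite inordK // ltnS.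
  by rewrite -[n in _ <= n]card_ord max_card.
apply: (@leq_trans (\sum_(j < n.+1 | P j) M)).
  apply: leq_sum => j Pj.
  apply: leq_trans (HM j); rewrite -(cards_draws A j) sum1dep_card.
  apply: subset_leq_card; apply/subsetP => B; rewrite !inE => /andP[/andP[-> _] /eqP <-].
  rewrite inordK //= ltnS. by rewrite -[n in _ <= n]card_ord max_card.
rewrite -(big_mkord (fun j => P j) (fun _ => M)) big_const_seq iter_addn_0 mulnC.
by rewrite /index_iota subn0.
Qed.

Lemma band_count (N : nat) (P : pred nat) (w : Rdefinitions.R) : (0 <= w)%R ->
  (forall i j, P i -> P j -> (i%:R - j%:R <= w)%R) ->
  ((count P (iota 0 N))%:R <= w + 1)%R.
Proof.
move=> w0 Hw.
have [hex|hne] := boolP (has P (iota 0 N)); last first.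
  by rewrite (eqP _ : count P _ = 0) ?add0r ?ler_wpDl // -leqn0 leqNgt -has_count.
have ex1 : exists i, P i && (i < N).
  case/hasP: hex => i; rewrite mem_iota => /andP[_ hi] Pi; exists i; rewrite Pi; lia.
have ub : forall i, P i && (i < N) -> i <= N by move=> i /andP[_ h]; lia.
case: (ex_minnP ex1) => lo /andP[Plo loN] lomin.
case: (ex_maxnP ex1 ub) => hi /andP[Phi hiN] himax.
have hle : (count P (iota 0 N) <= (hi - lo).+1)%N.
  rewrite -size_filter -(size_iota lo (hi - lo).+1).
  apply: uniq_leq_size; first by rewrite filter_uniq // iota_uniq.
  move=> x; rewrite mem_filter mem_iota => /andP[Px hx].
  have h1 := lomin x; have h2 := himax x.
  rewrite Px /= in h1 h2. have hxN : x < N by lia.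
  move: (h1 hxN) (h2 hxN); rewrite mem_iota; lia.
apply: le_trans (_ : ((hi - lo).+1)%:R <= _)%R; first by rewrite ler_nat.
have lohi : lo <= hi by have := himax lo; rewrite Plo loN; apply.
rewrite -addn1 natrD natrB // lerD2r; exact: Hw.
Qed.
Local Open Scope ring_scope.

Definition g_mono (n : nat) (eps : R) (L k : nat) (A : {set 'I_n})
  (T : 'I_L -> k.-tuple 'I_n) (b : 'I_L -> bool) (x : cube n) : bool :=
  let m := (n - #|A|)%N in
  let wC := hw x (~: A) in
  let S := S_T T x in
  if (1 < #|S|)%N || ((m%:R : R) / 2 + eps * Num.sqrt m%:R / 20 < wC%:R)%R then true
  else if (#|S| == 0)%N || ((wC%:R : R) < m%:R / 2)%R then false
  else match [pick l in S] with
       | Some l => b l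
       | None => false
       end.

Lemma g_mono_monotone n (eps : R) L k (A : {set 'I_n}) (T : 'I_L -> k.-tuple 'I_n) (b : 'I_L -> bool) :
  monotone (g_mono n eps L k A T b).
Proof.
move=> x y hxy; apply/implyP.
rewrite /g_mono.
have hS : S_T T x \subset S_T T y.
  apply/subsetP => l; rewrite !inE => /allP H; apply/allP => j /H.
  by move: (hxy j) => /implyP.
have hww : (hw x (~: A) <= hw y (~: A))%N.
  apply: subset_leq_card; apply/subsetP => i; rewrite !inE => /andP[-> xi] /=.
  by move: (hxy i) => /implyP; apply.
have hwr : ((hw x (~: A))%:R <= (hw y (~: A))%:R :> R) by rewrite ler_nat.
have hcS := subset_leq_card hS.
set Sx := S_T T x in hS hcS *; set Sy := S_T T y in hS hcS *.
set wx := hw x (~: A) in hww hwr *; set wy := hw y (~: A) in hww hwr *.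
set m := (n - #|A|)%N.
case Ey1: ((1 < #|Sy|)%N || _) => //.
have Ex1 : ((1 < #|Sx|)%N || ((m%:R : R) / 2 + eps * Num.sqrt m%:R / 20 < wx%:R)) = false.
  apply/negbTE; move/negbT: Ey1; rewrite !negb_or -!leNgt => /andP[h1 h2].
  apply/andP; split; first by rewrite -leqNgt; apply: leq_trans hcS _; rewrite leqNgt.
  exact: le_trans hwr h2.
rewrite Ex1.
case Ex2: ((#|Sx| == 0)%N || _) => //.
move/negbT: Ey1; move/negbT: Ex2; rewrite !negb_or -!leNgt -!leqNgt => /andP[h1 h2] /andP[h3 h4].
have Ey2 : ((#|Sy| == 0)%N || ((wy%:R : R) < m%:R / 2)) = false.
  apply/negbTE; rewrite negb_or -leNgt; apply/andP; split; last exact: le_trans h2 hwr.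
  by rewrite -lt0n; apply: leq_trans hcS; rewrite lt0n.
rewrite Ey2.
have -> : Sx = Sy.
  apply/eqP; rewrite eqEcard hS /=; apply: leq_trans h3 _; by rewrite lt0n.
by [].
Qed.

Definition bandA (a : nat) (c1 : R) : pred nat := fun i =>
  ((a%:R / 2 - c1 * Num.sqrt a%:R <= i%:R) && (i%:R <= a%:R / 2 + c1 * Num.sqrt a%:R)).
Definition bandC (m : nat) (eps : R) : pred nat := fun i =>
  (((m%:R : R) / 2 <= i%:R) && (i%:R <= m%:R / 2 + eps * Num.sqrt m%:R / 20)).

Lemma bad_sub n (c1 eps : R) L k (A : {set 'I_n}) (T : 'I_L -> k.-tuple 'I_n) (b : 'I_L -> bool) :
  [set x : cube n | f_yes c1 eps A T b x != g_mono n eps L k A T b x] \subset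
  [set x : cube n | bandA #|A| c1 (hw x A) && bandC (n - #|A|) eps (hw x (~: A))].
Proof.
apply/subsetP => x; rewrite !inE /f_yes /g_mono.
case: ifP => // H1; case: ifP => // H2.
move/negbT: H1; rewrite negb_or -leNgt -leqNgt => /andP[_ hC2].
move/negbT: H2; rewrite negb_or -leNgt => /andP[_ hC1].
case: pickP => [l _|_] //; rewrite /h_plus; case: (b l) => //=.
move=> hh; have : ~~ ((#|A|%:R / 2 + c1 * Num.sqrt #|A|%:R < (hw x A)%:R)
   || ((hw x A)%:R < #|A|%:R / 2 - c1 * Num.sqrt #|A|%:R)).
  by move: hh; case: (_ || _).
rewrite negb_or -!leNgt => /andP[h1 h2].
by rewrite /bandA /bandC h1 h2 hC1 hC2.
Qed.

Lemma bad_card n (c1 eps : R) L k (A : {set 'I_n}) (T : 'I_L -> k.-tuple 'I_n) (b : 'I_L -> bool) :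
  (#|[set x : cube n | f_yes c1 eps A T b x != g_mono n eps L k A T b x]| <=
  (count (bandA #|A| c1) (iota 0 n.+1) * 'C(#|A|, #|A|./2)) *
  (count (bandC (n - #|A|) eps) (iota 0 n.+1) * 'C(#|~: A|, #|~: A|./2)))%N.
Proof.
apply: leq_trans (subset_leq_card (bad_sub n c1 eps L k A T b)) _.
set X := [set x : cube n | _].
pose phi (x : cube n) := ([set i in A | x i], [set i in ~: A | x i]).
have phi_inj : injective phi.
  move=> x y [] /setP hA /setP hC; apply/ffunP => i.
  case: (boolP (i \in A)) => iA.
    by move: (hA i); rewrite !inE iA.
  by move: (hC i); rewrite !inE iA.
rewrite -(card_imset X phi_inj).
set SA := [set B : {set 'I_n} | (B \subset A) && bandA #|A| c1 #|B|].
set SC := [set B : {set 'I_n} | (B \subset ~: A) && bandC (n - #|A|) eps #|B|].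
apply: (@leq_trans #|setX SA SC|).
  apply: subset_leq_card; apply/subsetP => p /imsetP[x]; rewrite inE => /andP[h1 h2] ->.
  rewrite !inE h1 h2 !andbT /=; apply/andP; split; apply/subsetP => i; rewrite inE => /andP[] //.
rewrite cardsX leq_mul //.
  apply: card_subsets_band => i; exact: bin_max.
apply: card_subsets_band => i; exact: bin_max.
Qed.
Lemma sqr_bound (s M p : R) : 0 < s -> 0 <= M -> 0 < p ->
  M ^+ 2 * (3 * s ^+ 2 + 2) <= 2 * p ^+ 2 -> s * M <= 5 / 6 * p.
Proof.
move=> s0 M0 p0 H.
have H' : (s * M) ^+ 2 * 3 <= 2 * p ^+ 2.
  apply: le_trans H; rewrite exprMn; nra.
rewrite leNgt; apply/negP => Hc.
have : (5 / 6 * p) ^+ 2 < (s * M) ^+ 2.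
  rewrite ltr_pXn2r // ?nnegrE; nra.
nra.
Qed.

Lemma final_ineq (c1 eps sa sm MA MC pA pm cA cC : R) :
  0 < c1 -> 0 < eps -> 0 < sa -> 0 < sm -> 0 <= MA -> 0 <= MC -> 0 < pA -> 0 < pm ->
  0 <= cA -> cA <= 2 * c1 * sa + 1 -> 0 <= cC -> cC <= eps * sm / 20 + 1 ->
  MA ^+ 2 * (3 * sa ^+ 2 + 2) <= 2 * pA ^+ 2 ->
  MC ^+ 2 * (3 * sm ^+ 2 + 2) <= 2 * pm ^+ 2 ->
  1 <= c1 * sa / 5 -> 200 <= eps * sm ->
  cA * MA * (cC * MC) <= c1 * eps / 10 * (pA * pm).
Proof.
move=> c10 e0 sa0 sm0 MA0 MC0 pA0 pm0 cA0 cA1 cC0 cC1 HA HC h1 h2.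
have hA := sqr_bound sa MA pA sa0 MA0 pA0 HA.
have hC := sqr_bound sm MC pm sm0 MC0 pm0 HC.
have h3 : cA <= 11 / 5 * c1 * sa by lra.
have h4 : cC <= 11 / 200 * eps * sm by lra.
have h5 : cA * MA <= 11 / 6 * c1 * pA.
  apply: le_trans (_ : 11 / 5 * c1 * sa * MA <= _).
    by apply: ler_wpM2r.
  have : 0 <= 11 / 5 * c1 by lra.
  move=> hh; rewrite -mulrA; apply: le_trans (ler_wpM2l hh hA) _; lra.
have h6 : cC * MC <= 11 / 240 * eps * pm.
  apply: le_trans (_ : 11 / 200 * eps * sm * MC <= _).
    by apply: ler_wpM2r.
  have : 0 <= 11 / 200 * eps by lra.
  move=> hh; rewrite -mulrA; apply: le_trans (ler_wpM2l hh hC) _; lra.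
apply: le_trans (_ : (11 / 6 * c1 * pA) * (11 / 240 * eps * pm) <= _).
  apply: ler_pM => //; apply: mulr_ge0 => //.
have : 0 <= c1 * eps * pA * pm by apply: mulr_ge0; [apply: mulr_ge0|]; try apply: mulr_ge0; lra.
nra.
Qed.

Theorem mainTheorem5 :
  exists c1bar : R, 0 < c1bar <= 1 / 100 /\
  forall c1 : R, 0 < c1 < c1bar ->
  exists c0 : R, exists N : nat,
  forall (n : nat) (eps : R) (a k : nat),
    (N <= n)%N ->
    c0 / Num.sqrt n%:R <= eps -> eps < 1 ->
    a%:R = Num.sqrt n%:R / eps ->
    k%:R = Num.sqrt (n - a)%N%:R / eps ->
    forall (A : {set 'I_n}), #|A| = a ->
    forall (T : 'I_(2 ^ k %/ 10) -> k.-tuple 'I_n),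
      (forall l j, j \in T l -> j \notin A) ->
    forall (b : 'I_(2 ^ k %/ 10) -> bool),
    exists g : cube n -> bool,
      monotone g /\ dist (f_yes c1 eps A T b) g <= c1 * eps / 10.
Proof.
exists (1 / 100); split; first by apply/andP; split; lra.
move=> c1 /andP[c10 c1lt].
pose K : R := (25 / c1 ^+ 2) ^+ 2.
have K0 : 0 <= K by rewrite /K sqr_ge0.
exists 300, (Num.bound K).+1.
move=> n eps a k hN hc0 he1 ha hk A hA T hT b.
exists (g_mono n eps _ k A T b); split; first exact: g_mono_monotone.
have nK : K <= n%:R.
  apply: le_trans (ltW (archi_boundP K0)) _; rewrite ler_nat; exact: leq_trans hN.
have n1 : (0 < n)%N by apply: leq_trans hN.
set sn := Num.sqrt n%:R in hc0 ha.
have sn0 : 0 < sn by rewrite sqrtr_gt0 ltr0n.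
have sn2 : sn ^+ 2 = n%:R by rewrite sqr_sqrtr // ler0n.
have e0 : 0 < eps by apply: lt_le_trans hc0; rewrite divr_gt0.
have u300 : 300 <= eps * sn by rewrite -ler_pdivrMr.
have aeps : a%:R * eps = sn by rewrite ha mulfVK // gt_eqF.
have asn : sn <= a%:R by nra.
have snK : 25 / c1 ^+ 2 <= sn.
  rewrite -(ler_pXn2r (n := 2)) // ?nnegrE ?sqn2 ?(ltW sn0) //.
    by rewrite sn2.
  by apply: divr_ge0 => //; rewrite sqr_ge0.
set u := eps * sn in u300.
have e2a : eps ^+ 2 * a%:R = u by rewrite /u -aeps; rewrite expr2; ring.
have e2n : eps ^+ 2 * n%:R = u ^+ 2 by rewrite /u -sn2 exprMn.
have an : (a < n)%N.
  rewrite -(ltr_nat R); have : 0 < eps ^+ 2 * (n%:R - a%:R) by rewrite mulrBr e2a e2n; nra.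
  by rewrite pmulr_rgt0 ?exprn_gt0 // subr_gt0.
set m := (n - a)%N.
have mR : m%:R = n%:R - a%:R :> R by rewrite natrB // ltnW.
pose sm : R := Num.sqrt m%:R.
have sm2 : sm ^+ 2 = m%:R by rewrite sqr_sqrtr // ler0n.
have sm0 : 0 < sm by rewrite sqrtr_gt0 ltr0n subn_gt0.
have esm : 200 <= eps * sm.
  have h : 200 ^+ 2 <= (eps * sm) ^+ 2 by rewrite exprMn sm2 mR mulrBr e2a e2n; nra.
  by move: h; rewrite ler_pXn2r // nnegrE; nra.
pose sa : R := Num.sqrt a%:R.
have sa2 : sa ^+ 2 = a%:R by rewrite sqr_sqrtr // ler0n.
have sa0 : 0 < sa by rewrite sqrtr_gt0; lra.
have csa : 1 <= c1 * sa / 5.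
  have h : (5 / c1) ^+ 2 <= sa ^+ 2.
    rewrite sa2; apply: le_trans asn; apply: le_trans snK.
    by rewrite expr_div_n; lra.
  move: h; rewrite ler_pXn2r ?nnegrE ?(ltW sa0) //; last by apply: divr_ge0; lra.
  rewrite ler_pdivrMr // => h. rewrite ler_pdivlMr //; lra.
have Hb := bad_card n c1 eps _ k A T b.
have cC : #|~: A| = m.
  by rewrite cardsCs setCK card_ord hA.
rewrite cC hA -/m in Hb.
rewrite /dist.
have p2 : (2 ^ n)%:R = (2 ^ a)%:R * (2 ^ m)%:R :> R.
  by rewrite -natrM -expnD subnKC // ltnW.
rewrite p2 ler_pdivrMr; last by rewrite mulr_gt0 // ltr0n expn_gt0.
apply: le_trans (_ : (count (bandA a c1) (iota 0 n.+1) * 'C(a, a./2) *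
      (count (bandC m eps) (iota 0 n.+1) * 'C(m, m./2)))%:R <= _).
  by rewrite ler_nat.
rewrite !natrM.
apply: (final_ineq c1 eps sa sm) => //.
- by rewrite ltr0n expn_gt0.
- by rewrite ltr0n expn_gt0.
- apply: band_count; first by rewrite mulr_ge0 // ?mulr_ge0 ?sqrtr_ge0 //; lra.
  move=> i j /andP[h1 h2] /andP[h3 h4]; rewrite /sa -mulrA; lra.
- apply: band_count; first by rewrite divr_ge0 // ?mulr_ge0 ?sqrtr_ge0 //; lra.
  move=> i j /andP[h1 h2] /andP[h3 h4]; rewrite /sm; lra.
- have h := bin_sq a a./2.
  rewrite (_ : 4 ^ a = 2 ^ a * 2 ^ a)%N in h; last by rewrite -expnMn.
  move: h; rewrite -(ler_nat R) !natrM natrX natrD natrM sa2 -expr2.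
  by [].
- have h := bin_sq m m./2.
  rewrite (_ : 4 ^ m = 2 ^ m * 2 ^ m)%N in h; last by rewrite -expnMn.
  move: h; rewrite -(ler_nat R) !natrM natrX natrD natrM sm2 -expr2.
  by [].
Qed.
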